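(* Let $G=(V,E,\omega)\in\mathbb{G}_\pi$. Then for any nonempty $\mathcal{V}\subseteq V$, every sequence of reductions on $G$ with final vertex set $\mathcal{V}$ reduces $G$ to one and the same graph $\mathcal{R}_{\mathcal{V}}[G]=(\mathcal{V},\mathcal{E},\mu)$. Moreover, at least one such sequence of reductions always exists.
   Context: Let $\mathbb{W}$ be the field of rational functions $p(\lambda)/q(\lambda)$ in a complex variable $\lambda$, $p,q\in\mathbb{C}[\lambda]$, $q\neq0$; for $w=p/q$ put $\pi(w)=\deg p-\deg q$ (the zero function counts as $\pi\le0$). A graph $G=(V,E,\omega)$ is a finite directed graph, vertex set $V=\{v_1,\dots,v_n\}$, edges $E$ (loops allowed, at most one edge $e_{ij}$ from $v_i$ to $v_j$), weights $\omega:E\to\mathbb{W}\setminus\{0\}$, $\omega(e_{ij})=0$ if no such edge, $M(G)_{ij}=\omega(e_{ij})$. $\mathbb{G}_\pi$ is the set of graphs with $\pi(M(G)_{ij})\le0$ for all entries. $\bar S=V\setminus S$; $\ell(G)$ is $G$ without loops; $G|_U$ is an induced subgraph. A path is a sequence of distinct vertices $u_1,\dots,u_m$ ($m\ge2$) with edges $u_k\to u_{k+1}$; a cycle is the same with $u_1=u_m$, $u_1,\dots,u_{m-1}$ distinct; $u_2,\dots,u_{m-1}$ are interior. A nonempty $S\subseteq V$ is a structural set ($S\in st(G)$) if $\ell(G)|_{\bar S}$ has no cycles and $\omega(e_{ii})\ne\lambda$ for all $v_i\in\bar S$. For $v_i,v_j\in S$, $\mathcal{B}_{ij}(G;S)$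 is the set of paths or cycles from $v_i$ to $v_j$ with no interior vertex in $S$; $\mathcal{P}_\omega(u_1,\dots,u_m)=\omega(u_1u_2)\prod_{k=2}^{m-1}\frac{\omega(u_ku_{k+1})}{\lambda-\omega(u_ku_k)}$. The reduction $\mathcal{R}_S(G)$ has vertex set $S$, an edge $v_i\to v_j$ iff $\mathcal{B}_{ij}(G;S)\ne\emptyset$, of weight $\sum_{\beta\in\mathcal{B}_{ij}(G;S)}\mathcal{P}_\omega(\beta)$. Sets $S_m\subseteq\dots\subseteq S_1\subseteq V$ induce a sequence of reductions on $G$ with final vertex set $S_m$ if $S_1\in st(G)$ and, with $\mathcal{R}_1(G)=\mathcal{R}_{S_1}(G)$, $S_{i+1}\in st(\mathcal{R}_i(G))$ and $\mathcal{R}_{i+1}(G)=\mathcal{R}_{S_{i+1}}(\mathcal{R}_i(G))$ for $1\le i\le m-1$; the result is $\mathcal{R}_m(G)$. *)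

(* Defs.v *)
From HB Require Import structures.
From mathcomp Require Import all_boot all_order all_algebra.
From mathcomp Require Import complex.
From mathcomp Require Import Rstruct.
Set Implicit Arguments. Unset Strict Implicit. Unset Printing Implicit Defensive.
Import Order.TTheory GRing.Theory Num.Theory.
Local Open Scope ring_scope.

Definition Cx := complex Rdefinitions.R.

Definition W := {fraction {poly Cx}}.

Definition lam : W := tofrac 'X.

(* pi(w) <= 0 : w = p/q with deg p - deg q <= 0 (size = deg + 1; the zero
   function is written 0/1, so it satisfies this, as in the paper). Since
   deg p - deg q does not depend on the chosen representation of w != 0,
   this is exactly "pi(w) <= 0". *)
Definition pi_nonpos (w : W) : Prop :=
  exists p q : {poly Cx}, [/\ q != 0, w = tofrac p / tofrac q & (size p <= size q)%N].

(* A weighted directed graph whose vertices are among v_0,...,v_{n-1} ('I_n).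
   gV = vertex set, gE = edge set (ordered pairs, loops allowed, at most one
   edge i -> j), gw = weights, with gw e = 0 when e is not an edge (the matrix
   M(G)). *)
Record graph (n : nat) := Graph {
  gV : {set 'I_n};
  gE : {set 'I_n * 'I_n};
  gw : {ffun 'I_n * 'I_n -> W} }.

Definition wf_graph n (G : graph n) : Prop :=
  [/\ forall e, e \in gE G -> (e.1 \in gV G) && (e.2 \in gV G),
      forall e, e \in gE G -> gw G e != 0
    & forall e, e \notin gE G -> gw G e = 0].

Definition in_Gpi n (G : graph n) : Prop := forall i j, pi_nonpos (gw G (i, j)).

Definition edge n (G : graph n) : rel 'I_n := fun u v => (u, v) \in gE G.

(* l(G)|_T has a cycle: distinct vertices c = u_1..u_k (k >= 1) of T, with
   non-loop edges u_1 -> u_2 -> ... -> u_k -> u_1 (mathcomp's [cycle]). *)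
Definition has_loopless_cycle_in n (G : graph n) (T : {set 'I_n}) : Prop :=
  exists c : seq 'I_n,
    [/\ c != [::], uniq c, all (fun u => u \in T) c
      & cycle (fun u v => (u != v) && edge G u v) c].

Definition structural n (G : graph n) (S : {set 'I_n}) : Prop :=
  [/\ S != set0, S \subset gV G,
      ~ has_loopless_cycle_in G (gV G :\: S)
    & forall i, i \in gV G :\: S -> gw G (i, i) != lam].

Definition is_path n (G : graph n) (s : seq 'I_n) : bool :=
  if s is x :: p then [&& p != [::], uniq s & path (edge G) x p] else false.

Definition is_cycle n (G : graph n) (s : seq 'I_n) : bool :=
  if s is x :: p then
    [&& p != [::], last x p == x, uniq (belast x p) & path (edge G) x p]
  else false.

Definition interior (T : Type) (s : seq T) : seq T :=
  if s is x :: p then behead (belast x p) else [::].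

Definition inB n (G : graph n) (S : {set 'I_n}) (i j : 'I_n) (s : seq 'I_n) : bool :=
  if s is x :: p then
    [&& x == i, last x p == j, is_path G s || is_cycle G s
      & all (fun u => u \notin S) (interior s)]
  else false.

(* P_omega(u_1,...,u_m) = omega(u_1u_2) * prod_{k=2}^{m-1}
   omega(u_k u_{k+1}) / (lambda - omega(u_k u_k)) *)
Fixpoint Pint n (w : 'I_n * 'I_n -> W) (s : seq 'I_n) : W :=
  match s with
  | u :: ((v :: _) as p) => w (u, v) / (lam - w (u, u)) * Pint w p
  | _ => 1
  end.

Definition Pw n (w : 'I_n * 'I_n -> W) (s : seq 'I_n) : W :=
  match s with
  | u :: ((v :: _) as p) => w (u, v) * Pint w p
  | _ => 1
  end.

(* Every element of B_ij(G;S) has at most n+1 vertices, so B_ij(G;S) is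
   exactly the set of sequences t of length k <= n+1 with inB G S i j t. *)
Definition Bnonempty n (G : graph n) (S : {set 'I_n}) (i j : 'I_n) : bool :=
  [exists k : 'I_n.+2, [exists t : k.-tuple 'I_n, inB G S i j t]].

Definition Bsum n (G : graph n) (S : {set 'I_n}) (i j : 'I_n) : W :=
  \sum_(k < n.+2) \sum_(t : k.-tuple 'I_n | inB G S i j t) Pw (gw G) t.

Definition red_edges n (G : graph n) (S : {set 'I_n}) : {set 'I_n * 'I_n} :=
  [set e | [&& e.1 \in S, e.2 \in S & Bnonempty G S e.1 e.2]].

Definition red n (G : graph n) (S : {set 'I_n}) : graph n :=
  Graph S (red_edges G S)
        [ffun e => if e \in red_edges G S then Bsum G S e.1 e.2 else 0].

(* [:: S_1; ...; S_m] induces a sequence of reductions on G: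
   S_1 in st(G), S_{i+1} in st(R_i(G)) (this includes S_{i+1} \subset S_i).
   Its result R_m(G) is foldl red G [:: S_1; ...; S_m]. *)
Fixpoint induces n (G : graph n) (ss : seq {set 'I_n}) : Prop :=
  match ss with
  | [::] => True
  | S1 :: ss1 => structural G S1 /\ induces (red G S1) ss1
  end.

Definition seq_result n (G : graph n) (ss : seq {set 'I_n}) : graph n :=
  foldl (@red n) G ss.

(* Main.v *)
Require Import Defs.
From mathcomp Require Import all_boot all_order all_algebra.
From mathcomp Require Import complex Rstruct.
Import GRing.Theory Num.Theory Order.TTheory.
Set Implicit Arguments. Unset Strict Implicit. Unset Printing Implicit Defensive.
Local Open Scope ring_scope.
Local Notation "x %:F" := (tofrac x).

Lemma pi0 : pi_nonpos 0.
Proof. exists 0, 1; split; first exact: oner_neq0. by rewrite tofrac0 mul0r. by rewrite size_poly0. Qed.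

Lemma pi1 : pi_nonpos 1.
Proof. exists 1, 1; split => //; first exact: oner_neq0. by rewrite divrr // unitfE tofrac_eq0 oner_neq0. Qed.

Lemma size_le_mul (p q p' q' : {poly Cx}) : q != 0 -> q' != 0 ->
  leq (size p) (size q) -> leq (size p') (size q') -> leq (size (p * p')) (size (q * q')).
Proof.
move=> hq hq' h h'; rewrite (size_mul hq hq'); apply: leq_trans (size_polyMleq p p') _.
by rewrite -!subn1 leq_sub2r // leq_add.
Qed.

Lemma piM w1 w2 : pi_nonpos w1 -> pi_nonpos w2 -> pi_nonpos (w1 * w2).
Proof.
move=> [p1 [q1 [h1 -> s1]]] [p2 [q2 [h2 -> s2]]].
exists (p1 * p2), (q1 * q2); split; first by rewrite mulf_neq0.
  by rewrite mulf_div !tofracM.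
exact: size_le_mul.
Qed.

Lemma piD w1 w2 : pi_nonpos w1 -> pi_nonpos w2 -> pi_nonpos (w1 + w2).
Proof.
move=> [p1 [q1 [h1 -> s1]]] [p2 [q2 [h2 -> s2]]].
exists (p1 * q2 + p2 * q1), (q1 * q2); split; first by rewrite mulf_neq0.
  by rewrite addf_div ?tofrac_eq0 // tofracD !tofracM.
apply: leq_trans (size_polyD _ _) _; rewrite geq_max; apply/andP; split.
  exact: size_le_mul.
by rewrite mulrC; apply: size_le_mul.
Qed.

Lemma size_XB (q p : {poly Cx}) : q != 0 -> leq (size p) (size q) ->
  size (q * 'X - p) = (size q).+1.
Proof.
move=> hq hp; rewrite size_addl size_mulX // size_polyN ltnS //.
Qed.

Lemma lamB p q : q != 0 -> lam - p%:F / q%:F = (q * 'X - p)%:F / q%:F.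
Proof.
move=> hq; rewrite tofracB mulrBl tofracM [_ * 'X%:F]mulrC mulfK ?tofrac_eq0 //.
Qed.

Lemma piV w1 w2 : pi_nonpos w1 -> pi_nonpos w2 -> pi_nonpos (w1 / (lam - w2)).
Proof.
move=> [p1 [q1 [h1 -> s1]]] [p2 [q2 [h2 -> s2]]].
have hX : q2 * 'X - p2 != 0.
  by rewrite -size_poly_eq0 size_XB.
exists (p1 * q2), (q1 * (q2 * 'X - p2)); split; first by rewrite mulf_neq0.
  by rewrite lamB // invf_div mulf_div !tofracM.
rewrite (size_mul h1 hX) size_XB // addnS /=.
apply: leq_trans (size_polyMleq _ _) _.
apply: leq_trans (leq_pred _) _; by rewrite leq_add2r.
Qed.

Lemma pi_neq_lam w : pi_nonpos w -> w != lam.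
Proof.
move=> [p [q [hq -> s]]]; apply/eqP => e.
have : p%:F = ('X * q)%:F.
  by rewrite tofracM -/lam -e mulrC mulrC divfK // tofrac_eq0.
move/eqP; rewrite tofrac_eq => /eqP ep.
by move: s; rewrite ep mulrC size_mulX // ltnn.
Qed.

Section Useq.
Variable n : nat.
Implicit Types (F : seq 'I_n -> W).

Fixpoint U (N : nat) : seq (seq 'I_n) :=
  if N is N'.+1 then [::] :: [seq x :: s | x <- enum 'I_n, s <- U N'] else [:: [::]].

Lemma sumU0 F : \sum_(s <- U 0) F s = F [::].
Proof. by rewrite big_seq1. Qed.

Lemma sumUS F N : \sum_(s <- U N.+1) F s = F [::] + \sum_(x : 'I_n) \sum_(s <- U N) F (x :: s).
Proof. by rewrite /= big_cons big_allpairs_dep big_enum. Qed.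

Lemma sumU_bound N M F : (forall s, (N < size s)%N -> F s = 0) -> (N <= M)%N ->
  \sum_(s <- U N) F s = \sum_(s <- U M) F s.
Proof.
elim: N M F => [|N IH] [|M] F hF hNM //.
  rewrite sumU0 sumUS big1 ?addr0 // => x _; rewrite big1 // => s _; exact: hF.
rewrite !sumUS; congr (_ + _); apply: eq_bigr => x _; apply: IH => // s hs.
exact: hF.
Qed.

Lemma sum_tuple0 F : \sum_(t : 0.-tuple 'I_n) F t = F [::].
Proof.
rewrite (big_pred1 [tuple]) //= => t; apply/esym/eqP; exact: tuple0.
Qed.

Lemma sum_tupleS k F : \sum_(t : k.+1.-tuple 'I_n) F t =
   \sum_(x : 'I_n) \sum_(t : k.-tuple 'I_n) F (x :: t).
Proof.
rewrite pair_big /=.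
rewrite (reindex (fun p : 'I_n * k.-tuple 'I_n => [tuple of p.1 :: p.2])) //=.
exists (fun t : k.+1.-tuple 'I_n => (thead t, [tuple of behead t])).
  by move=> [x t] _ /=; congr (_, _); apply: val_inj.
move=> t _; case/tupleP: t => x t /=; exact: val_inj.
Qed.

Lemma sumT_U N F : \sum_(k < N.+1) \sum_(t : k.-tuple 'I_n) F t = \sum_(s <- U N) F s.
Proof.
elim: N F => [|N IH] F.
  by rewrite big_ord1 sum_tuple0 sumU0.
rewrite big_ord_recl sum_tuple0 sumUS; congr (_ + _).
under eq_bigr do rewrite sum_tupleS.
rewrite exchange_big /=; apply: eq_bigr => x _; exact: IH.
Qed.
End Useq.

Lemma cyc_split (T : eqType) (e : rel T) x q : path e x q -> uniq q -> x \in q ->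
  exists c, [/\ c != [::], uniq c, {subset c <= x :: q} & cycle e c].
Proof.
move=> hp hu hx; case/splitPr: hx hp hu => p1 p2 hp hu.
exists (x :: p1); split => //.
- rewrite cat_uniq in hu; case/and3P: hu => u1 /hasPn u2 u3 /=.
  rewrite u1 andbT; apply/negP => hx; move: (u2 x); rewrite inE eqxx => /(_ isT).
  by rewrite hx.
- by move=> z; rewrite !inE mem_cat => /orP[->|->] //; rewrite orbT.
- rewrite /cycle rcons_path; move: hp; rewrite cat_path /= => /and3P[-> -> _] //.
Qed.

Lemma cyc_extract (T : eqType) (e : rel T) x p : path e x p -> ~~ uniq (x :: p) ->
  exists c, [/\ c != [::], uniq c, {subset c <= x :: p} & cycle e c].
Proof.
elim: p x => [|y p IH] x //= /andP[exy hp].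
rewrite negb_and negbK; case hu: (uniq (y :: p)); last first.
  move=> _; have [c [c0 cu cs cc]] := IH y hp (negbT hu).
  by exists c; split => // z /cs hz; rewrite inE hz orbT.
rewrite -/(uniq (y :: p)) hu orbF => hx.
have hp' : path e x (y :: p) by rewrite /= exy.
have [c [c0 cu cs cc]] := cyc_split hp' hu hx.
by exists c.
Qed.

Lemma uniq_size_le n (s : seq 'I_n) : uniq s -> (size s <= n)%N.
Proof. move/card_uniqP <-; apply: leq_trans (max_card _) _; by rewrite card_ord. Qed.

Lemma succ_cycle (T : finType) (e : rel T) (Z : {set T}) a0 : a0 \in Z ->
  (forall a, a \in Z -> exists2 v, v \in Z & e a v) ->
  exists c, [/\ c != [::], uniq c, {subset c <= Z} & cycle e c].
Proof.
move=> a0Z hZ.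
pose f a := odflt a [pick v in Z | e a v].
have hf a : a \in Z -> f a \in Z /\ e a (f a).
  move=> aZ; rewrite /f; case: pickP => [v /andP[]//|h].
  have [v vZ ev] := hZ a aZ; by move: (h v); rewrite vZ ev.
have hp k : forall a, a \in Z -> path e a (traject f (f a) k) /\ all (mem Z) (traject f (f a) k).
  elim: k => [|k IHk] a aZ //=.
  have [faZ ea] := hf a aZ; have [h1 h2] := IHk _ faZ.
  by rewrite ea faZ h1 h2.
have [p1 p2] := hp #|T| a0 a0Z.
have nu : ~~ uniq (a0 :: traject f (f a0) #|T|).
  apply/negP => /card_uniqP; rewrite /= size_traject => h.
  by move: (max_card (mem (a0 :: traject f (f a0) #|T|))); rewrite h ltnn.
have [c [c0 cu cs cc]] := cyc_extract p1 nu.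
exists c; split => // z /cs; rewrite inE => /orP[/eqP->//|]; by move/(allP p2).
Qed.

Section Walks.
Variable n : nat.
Implicit Types (G : graph n) (X S : {set 'I_n}).

Definition Walk G X i j := exists q, path (edge G) i (rcons q j) /\ all (fun u => u \notin X) q.

Lemma interior_rcons (i j : 'I_n) r : interior (i :: rcons r j) = r.
Proof. by rewrite /interior belast_rcons. Qed.

Lemma inB_walk G X i j s : inB G X i j s -> Walk G X i j.
Proof.
case: s => [|x p] //= /and4P[/eqP-> /eqP hl hpc hint].
have [hp0 hp] : p != [::] /\ path (edge G) i p.
  by move: hpc; rewrite /is_path /is_cycle => /orP[/and3P[]|/and4P[]].
clear hpc.
case/lastP: p hp0 hl hp hint => [|r y] // _; rewrite last_rcons => -> hp.
by rewrite belast_rcons => hint; exists r.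
Qed.

Lemma Bne_walk G X i j : Bnonempty G X i j -> Walk G X i j.
Proof. by case/existsP => k /existsP[t /inB_walk]. Qed.

Lemma inB_Bne G X i j s : (size s <= n.+1)%N -> inB G X i j s -> Bnonempty G X i j.
Proof.
move=> hs hB; apply/existsP; exists (Ordinal (hs : size s < n.+2)%N).
apply/existsP; exists (@Tuple _ _ s (eqxx (size s))); exact: hB.
Qed.

Lemma walk_Bne G X i j : i \in X -> j \in X -> Walk G X i j -> Bnonempty G X i j.
Proof.
move=> iX jX [q [hp hq]].
have hn : (0 < n)%N by case: n i {iX hp hq} => [[]|].
case: (eqVneq i j) => [eij|nij].
- subst j; case: q hp hq => [|y q] hp hq.
    apply: (@inB_Bne _ _ _ _ [:: i; i]); first by rewrite /=.
    move: hp => /= /andP[-> _]; by rewrite eqxx orbT.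
  move: hp => /= /andP[eiy hp]; move: hq => /= /andP[yX hq].
  have yi : y != i by apply: contraNneq yX => ->.
  have : last y (rcons q i) = i by rewrite last_rcons.
  case/shortenP: hp => p' hp' hu' hsub.
  case/lastP: p' hp' hu' hsub => [|r z] hp' hu' hsub.
    by move=> /= /eqP; rewrite (negbTE yi).
  rewrite !last_rcons => ezi; subst z.
  have hr : all (fun u => u \notin X) r.
    apply/allP => u ur; move: hu'; rewrite /= rcons_uniq mem_rcons inE => /andP[_ /andP[ir _]].
    have : u \in rcons q i by apply: hsub; rewrite mem_rcons inE ur orbT.
    rewrite mem_rcons inE => /orP[/eqP eu|]; first by move: ir; rewrite -eu ur.
    by move/(allP hq).
  apply: (@inB_Bne _ _ _ _ (i :: rcons (y :: r) i)).
    move: hu'; rewrite -rcons_cons => /uniq_size_le; by rewrite /= !size_rcons.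
  rewrite /= eqxx last_rcons eqxx /=.
  rewrite belast_rcons /= yX hr andbT andbT; apply/orP; right.
  rewrite eiy hp' !andbT.
  move: hu'; rewrite /= rcons_uniq mem_rcons !inE => /andP[/norP[yi' ir] /andP[yr ur]].
  by rewrite ur ir andbT eq_sym (negbTE yi) (negbTE yr).
- have : last i (rcons q j) = j by rewrite last_rcons.
  case/shortenP: hp => p' hp' hu' hsub.
  case/lastP: p' hp' hu' hsub => [|r z] hp' hu' hsub.
    by move=> /= eij; move: nij; rewrite eij eqxx.
  rewrite !last_rcons => ezj; subst z.
  apply: (@inB_Bne _ _ _ _ (i :: rcons r j)).
    by move: hu' => /uniq_size_le /= /leq_trans; apply.
  rewrite /= eqxx last_rcons eqxx /= belast_rcons /=.
  apply/andP; split.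
    apply/orP; left; rewrite hp' andbT -size_eq0 size_rcons /=; by move: hu' => /= ->.
  apply/allP => u ur; move: hu'; rewrite /= rcons_uniq => /andP[_ /andP[jr _]].
  have : u \in rcons q j by apply: hsub; rewrite mem_rcons inE ur orbT.
  rewrite mem_rcons inE => /orP[/eqP eu|]; first by move: jr; rewrite -eu ur.
  by move/(allP hq).
Qed.



Lemma edge_red G S a b : edge (red G S) a b = [&& a \in S, b \in S & Bnonempty G S a b].
Proof. by rewrite /edge /red /red_edges /= inE. Qed.

Lemma walk_mono G (X Y : {set 'I_n}) (i j : 'I_n) : X \subset Y -> Walk G Y i j -> Walk G X i j.
Proof.
move=> XY [q [hp hq]]; exists q; split => //; apply/allP => u uq.
by apply: contra (allP hq u uq); move/(subsetP XY).
Qed.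

Lemma walk_red1 G S X i j : X \subset S -> Walk (red G S) X i j -> Walk G X i j.
Proof.
move=> XS [q [hp hq]]; elim: q i hp hq => [|y q IH] i /= hp hq.
  move: hp; rewrite andbT edge_red => /and3P[_ _ /Bne_walk]; exact: walk_mono.
move: hp hq => /andP[eiy hp] /andP[yX hq].
have [q1 [hp1 hq1]] : Walk G X i y.
  by move: eiy; rewrite edge_red => /and3P[_ _ /Bne_walk]; exact: walk_mono.
have [q2 [hp2 hq2]] := IH y hp hq.
exists (q1 ++ y :: q2); split.
  by rewrite rcons_cat /= -cat_rcons cat_path hp1 last_rcons hp2.
by rewrite all_cat /= yX hq1 hq2.
Qed.

Lemma walk_red2 G S X i j : X \subset S -> i \in S -> j \in S ->
  Walk G X i j -> Walk (red G S) X i j.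
Proof.
move=> XS iS jS [q [hp hq]].
suff H : forall q a r, a \in S -> all (fun u => u \notin S) r ->
    all (fun u => u \notin X) q -> path (edge G) a (r ++ rcons q j) -> Walk (red G S) X a j.
  by apply: (H q i [::]).
clear q hp hq i iS => q; elim: q => [|b q IH] a r aS hr hq hp.
  exists [::]; split => //=; rewrite andbT edge_red aS jS /=.
  by apply: walk_Bne => //; exists r; rewrite cats1 in hp.
move: hq => /= /andP[bX hq].
case: (boolP (b \in S)) => bS.
  move: hp; rewrite -cat_rcons cat_path last_rcons => /andP[h1 h2].
  have [q2 [hp2 hq2]] := IH b [::] bS isT hq h2.
  exists (b :: q2); split; last by rewrite /= bX hq2.
  rewrite /= hp2 andbT edge_red aS bS /=.
  by apply: walk_Bne => //; exists r.
apply: (IH a (rcons r b)) => //.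
  by rewrite all_rcons bS hr.
by rewrite cat_rcons.
Qed.

Lemma Bne_red G S X i j : X \subset S -> i \in X -> j \in X ->
  Bnonempty (red G S) X i j = Bnonempty G X i j.
Proof.
move=> XS iX jX; have iS := subsetP XS i iX; have jS := subsetP XS j jX.
apply/idP/idP => h.
  by apply: walk_Bne => //; apply: (walk_red1 XS); apply: Bne_walk.
by apply: walk_Bne => //; apply: walk_red2 => //; apply: Bne_walk.
Qed.
End Walks.

Definition ginv n (G : graph n) :=
  (forall e, e \in gE G -> (e.1 \in gV G) && (e.2 \in gV G)) /\
  (forall e, e \notin gE G -> gw G e = 0).

Definition Ax n (H : graph n) (u : 'I_n -> W) t := \sum_v gw H (t, v) * u v.

Definition PropP n (H H' : graph n) := forall u : 'I_n -> W,
  (forall t, t \in gV H :\: gV H' -> lam * u t = Ax H u t) ->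
  forall s, s \in gV H' -> Ax H u s = Ax H' u s.

Definition PropE n (H H' : graph n) := forall u : 'I_n -> W, exists u' : 'I_n -> W,
  (forall s, s \in gV H' -> u' s = u s) /\
  (forall t, t \in gV H :\: gV H' -> lam * u' t = Ax H u' t).

Section Red.
Variable n : nat.
Variable G : graph n.
Variable S : {set 'I_n}.
Hypothesis hinv : ginv G.
Local Notation w := (gw G).

Definition pathT (a : 'I_n) (r : seq 'I_n) (j : 'I_n) :=
  [&& r != [::], last a r == j, uniq (a :: r), path (edge G) a r
    & all (fun u => u \notin S) (belast a r)].

Definition Ppath a j := \sum_(r <- U n n) (if pathT a r j then Pint w (a :: r) else 0).

Lemma w0 u v : ~~ edge G u v -> w (u, v) = 0.
Proof. by move=> h; apply: hinv.2. Qed.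

Lemma edgeV u v : edge G u v -> (u \in gV G) && (v \in gV G).
Proof. by move=> h; apply: hinv.1 (u, v) h. Qed.

Lemma inB_size i j s : inB G S i j s -> (size s <= n.+1)%N.
Proof.
case: s => [|x p] //= /and4P[_ _ /orP[/and3P[_ hu _]|/and4P[_ _ hu _]] _].
  exact: leqW (uniq_size_le (s := x :: p) hu).
by rewrite ltnS -(size_belast x p); exact: uniq_size_le hu.
Qed.

Lemma inB_cons1 i j y : inB G S i j [:: i; y] = (y == j) && edge G i y.
Proof.
rewrite /inB /= eqxx /= /is_path /is_cycle /= !andbT inE.
by case: (eqVneq i y) => [->|] /=; rewrite ?eqxx ?andbF //= orbF.
Qed.

Lemma inB_cons2 i j y r : i \in S -> j \in S -> r != [::] ->
  inB G S i j [:: i, y & r] = edge G i y && pathT y r j.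
Proof.
move=> iS jS; case/lastP: r => [|r z] // _.
rewrite /inB /pathT eqxx /= -!rcons_cons !last_rcons -size_eq0 size_rcons /=.
case: (eqVneq z j) => [->|zj]; last by rewrite !andbF.
rewrite belast_rcons; case hall: (all _ (y :: r)); last by rewrite !andbF.
have [iy ir jy jr] : [/\ i != y, i \notin r, j != y & j \notin r].
  move: hall => /= /andP[yS /allP hr]; split.
  - by apply: contraNneq yS => <-.
  - by apply/negP => /hr; rewrite iS.
  - by apply: contraNneq yS => <-.
  - by apply/negP => /hr; rewrite jS.
have h1 : (i \notin y :: rcons r j) = (i != j).
  by rewrite in_cons mem_rcons in_cons (negbTE iy) (negbTE ir) orbF.
have h2 : (y \notin rcons r j) = (y \notin r).
  by rewrite mem_rcons in_cons negb_or eq_sym jy.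
have h3 : uniq (rcons r j) = uniq r by rewrite rcons_uniq jr.
have h4 : (i \notin y :: r) = true by rewrite in_cons negb_or iy ir.
rewrite !andbT h1 h2 h3 -/(uniq (y :: r)) h4.
case: (eqVneq i j) => [->|nij] /=; rewrite ?eqxx ?andbF ?orbF //=;
  by case: (edge G _ y); rewrite ?andbF.
Qed.

Lemma sum_nil_only N (F : seq 'I_n -> W) :
  \sum_(r <- U n N) (if r == [::] then F r else 0) = F [::].
Proof.
case: N => [|N]; rewrite ?sumU0 ?sumUS /= ?eqxx //.
by rewrite big1 ?addr0 // => x _; rewrite big1.
Qed.

Lemma sumUS0 (F : seq 'I_n -> W) N : F [::] = 0 ->
  \sum_(s <- U n N.+1) F s = \sum_x \sum_(s <- U n N) F (x :: s).
Proof. by move=> h; rewrite sumUS h add0r. Qed.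

Lemma sum_only (i : 'I_n) (H : 'I_n -> W) : (forall x, x != i -> H x = 0) ->
  \sum_x H x = H i.
Proof. by move=> h; rewrite (bigD1 i) //= big1 ?addr0. Qed.

Lemma Bsum_dec i j : i \in S -> j \in S ->
  Bsum G S i j = w (i, j) + \sum_y w (i, y) * Ppath y j.
Proof.
move=> iS jS; rewrite /Bsum.
under eq_bigr do rewrite big_mkcond /=.
pose F s := if inB G S i j s then Pw w s else 0.
rewrite (sumT_U (n.+1) F).
rewrite (@sumU_bound _ n.+1 n.+2); last by [].
  2: by move=> s hs; rewrite /F; case: ifP => // /inB_size; rewrite leqNgt hs.
rewrite sumUS0 // (@sum_only i); last first.
  by move=> x xi; rewrite big1 // => s _; rewrite /F /inB (negbTE xi).
rewrite sumUS0; last by rewrite /F /inB /is_path /is_cycle /= !andbF.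
rewrite /F.
have hF y r : (if inB G S i j [:: i, y & r] then Pw w [:: i, y & r] else 0) =
  (if r == [::] then (if y == j then (if edge G i y then w (i, y) else 0) else 0) else 0)
  + w (i, y) * (if pathT y r j then Pint w (y :: r) else 0).
  case: (eqVneq r [::]) => [->|r0].
    rewrite inB_cons1 /= /pathT /= mulr0 addr0 mulr1.
    by case: (y == j); case: (edge G i y).
  rewrite inB_cons2 // add0r.
  case e: (edge G i y) => /=.
    by case: (pathT y r j); rewrite ?mulr0.
  by rewrite w0 ?e // mul0r.
under eq_bigr do under eq_bigr do rewrite hF.
under eq_bigr do rewrite big_split /= sum_nil_only.
rewrite big_split /=; congr (_ + _).
  rewrite -big_mkcond big_pred1_eq.
  by case e: (edge G i j) => //; rewrite w0 ?e.
by apply: eq_bigr => y _; rewrite /Ppath mulr_sumr.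
Qed.

Lemma pathT_cons a y r j : r != [::] ->
  pathT a (y :: r) j = [&& edge G a y, a \notin y :: r, a \notin S & pathT y r j].
Proof.
move=> r0; rewrite /pathT r0 /=.
by case: (last y r == j); case: (a \in y :: r); case: (y \in r); case: (uniq r);
  case: (edge G a y); case: (path _ _ _); case: (a \in S); case: (all _ _).
Qed.

Lemma path_verts a r : path (edge G) a r -> all (fun u => u \in gV G) r.
Proof.
elim: r a => [|b r IH] a //= /andP[eab hp].
by rewrite (IH b hp) andbT; case/andP: (edgeV eab).
Qed.

Lemma path_loopless (e : rel 'I_n) a r : path e a r -> uniq (a :: r) ->
  path (fun u v => (u != v) && e u v) a r.
Proof.
elim: r a => [|b r IH] a //= /andP[eab hp] /andP[].
rewrite in_cons negb_or => /andP[ab ar] hu.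
by rewrite ab eab IH.
Qed.

Hypothesis hac : ~ has_loopless_cycle_in G (gV G :\: S).

Lemma acyc_ppath a y r j : j \in S -> a \notin S -> edge G a y -> a != y ->
  pathT y r j -> a \notin r.
Proof.
move=> jS aS eay ay /and5P[r0 hl hu hp hall].
apply/negP => ar; apply: hac.
case/splitPr: ar hl hu hp hall r0 => r1 r2 hl hu hp hall _.
exists [:: a, y & r1]; split => //.
- have := hu; rewrite -cat_cons cat_uniq => /and3P[u1 /hasPn h2 _].
  by rewrite cons_uniq u1 andbT; exact: h2 a (mem_head a r2).
- have gva : a \in gV G by case/andP: (edgeV eay).
  have gvy : y \in gV G by case/andP: (edgeV eay).
  have hv := path_verts hp.
  have hs : all (fun u => u \notin S) (y :: r1).
    move: hall; rewrite belast_cat all_cat => /andP[h1 /= /andP[h3 _]].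
    by change (all (fun u => u \notin S) (y :: r1)); rewrite lastI all_rcons h3 h1.
  rewrite /= !inE aS gva /=; apply/andP; split.
    by move: hs => /= /andP[-> _]; rewrite gvy.
  apply/allP => u ur; rewrite inE.
  move/allP: hs => /(_ u); rewrite in_cons ur orbT => /(_ isT) ->.
  by move/allP: hv => /(_ u); rewrite mem_cat ur => /(_ isT).
- rewrite /cycle /= ay eay /=.
  have := path_loopless hp hu; rewrite cat_path /= => /and3P[h1 h2 _].
  by rewrite rcons_path h1.
Qed.

Definition cc a y := w (a, y) / (lam - w (a, a)).

Lemma pathT_size a r j : pathT a r j -> (size r < n)%N.
Proof. by case/and5P => _ _ /uniq_size_le. Qed.

Lemma Ppath_rec a j : j \in S -> a \notin S ->
  Ppath a j = cc a j + \sum_(y | y != a) cc a y * Ppath y j.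
Proof.
move=> jS aS; rewrite /Ppath (@sumU_bound _ n n.+1) //; last first.
  move=> s hs; case: ifP => // /pathT_size; by rewrite ltnNge ltnW.
rewrite sumUS0; last by rewrite /pathT eqxx.
have hF y r : (if pathT a (y :: r) j then Pint w [:: a, y & r] else 0) =
  (if r == [::] then (if y == j then cc a y else 0) else 0)
  + (if y != a then cc a y * (if pathT y r j then Pint w (y :: r) else 0) else 0).
  case: (eqVneq r [::]) => [->|r0].
    have -> : pathT y [::] j = false by [].
    rewrite mulr0 if_same addr0 /pathT /= !andbT aS andbT.
    case: (eqVneq y j) => [->|//].
    have aj : a != j by apply: contraNneq aS => ->.
    rewrite mulr1 in_cons negb_or aj /=.
    case e: (edge G a j) => //; by rewrite /cc w0 ?e // mul0r.
  rewrite add0r pathT_cons // aS.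
  have -> : Pint w [:: a, y & r] = cc a y * Pint w (y :: r) by [].
  set P := Pint w (y :: r).
  case: (eqVneq y a) => [->|ya]; first by rewrite in_cons eqxx /= andbF.
  rewrite /=.
  case hT: (pathT y r j); last by rewrite !andbF mulr0.
  case e: (edge G a y) => /=; last by rewrite /cc w0 ?e // !mul0r.
  rewrite in_cons (negbTE (acyc_ppath jS aS e _ hT)) ?orbF; last by rewrite eq_sym.
  by rewrite eq_sym (negbTE ya).
under eq_bigr => x _ do under eq_bigr => s _ do rewrite hF.
under eq_bigr do rewrite big_split /= sum_nil_only.
rewrite big_split /=; congr (_ + _).
  by rewrite -big_mkcond big_pred1_eq.
rewrite [RHS]big_mkcond /=; apply: eq_bigr => y _.
case: (y != a); last by rewrite big1.
by rewrite mulr_sumr.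
Qed.

Lemma Ppath_S y j : y \in S -> Ppath y j = 0.
Proof.
move=> yS; rewrite /Ppath big1 // => r _; case: ifP => // /and5P[r0 _ _ _].
by case: r r0 => [|z r] //= _ /andP[]; rewrite yS.
Qed.

Hypothesis hlam : forall i, i \in gV G :\: S -> w (i, i) != lam.

Lemma lam_sub t : t \in gV G :\: S -> lam - w (t, t) != 0.
Proof. by move=> /hlam h; rewrite subr_eq0 eq_sym. Qed.

Lemma Ppath_eq t j : t \in gV G :\: S -> j \in S ->
  lam * Ppath t j = w (t, j) + \sum_y w (t, y) * Ppath y j.
Proof.
move=> htS jS; have tS : t \notin S by move: htS; rewrite inE => /andP[].
have hd := lam_sub htS.
have E : (lam - w (t, t)) * Ppath t j = w (t, j) + \sum_(y | y != t) w (t, y) * Ppath y j.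
  rewrite Ppath_rec // mulrDr mulr_sumr; congr (_ + _).
    by rewrite /cc mulrC divfK.
  by apply: eq_bigr => y _; rewrite /cc mulrA [(_ - _) * _]mulrC divfK.
by rewrite (bigD1 t) //= addrCA -E mulrBl addrC subrK.
Qed.

Lemma Bsum_empty i j : ~~ Bnonempty G S i j -> Bsum G S i j = 0.
Proof.
move=> h; rewrite /Bsum big1 // => k _; rewrite big1 // => t ht.
by move: h; apply: contraNeq => _; apply/existsP; exists k; apply/existsP; exists t.
Qed.

Lemma red_weight s v : s \in S ->
  gw (red G S) (s, v) = if v \in S then Bsum G S s v else 0.
Proof.
move=> sS; rewrite /red /= ffunE /red_edges inE /= sS /=.
case: (v \in S) => //=; case: ifP => // h; by rewrite Bsum_empty ?h.
Qed.

Lemma Ax_red u s : s \in S -> Ax (red G S) u s = \sum_(v in S) Bsum G S s v * u v.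
Proof.
move=> sS; rewrite /Ax [RHS]big_mkcond /=; apply: eq_bigr => v _.
by rewrite red_weight //; case: (v \in S); rewrite ?mul0r.
Qed.

Lemma sum_splitS (f : 'I_n -> W) : \sum_v f v = \sum_(v in S) f v + \sum_(v | v \notin S) f v.
Proof. exact: bigID. Qed.

Lemma key_sum (t : 'I_n) (x : 'I_n -> W) :
  \sum_(j in S) (w (t, j) + \sum_y w (t, y) * Ppath y j) * x j =
  \sum_(v in S) w (t, v) * x v + \sum_(v | v \notin S) w (t, v) * (\sum_(j in S) Ppath v j * x j).
Proof.
under eq_bigr do rewrite mulrDl.
rewrite big_split /=; congr (_ + _).
under eq_bigr do rewrite mulr_suml.
rewrite exchange_big /= [LHS](bigID (fun v => v \in S)) /= big1 ?add0r.
  by apply: eq_bigr => v _; rewrite mulr_sumr; apply: eq_bigr => j _; rewrite mulrA.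
by move=> v vS; rewrite big1 // => j _; rewrite Ppath_S // mulr0 mul0r.
Qed.

Hypothesis hSV : S \subset gV G.

Lemma red_ext : PropE G (red G S).
Proof.
move=> u; exists (fun a => if a \in S then u a else \sum_(j in S) Ppath a j * u j).
split => [s /= sS|t]; first by rewrite sS.
rewrite /= => htS; have tS : t \notin S by move: htS; rewrite inE => /andP[].
rewrite (negbTE tS) mulr_sumr.
under eq_bigr => j jS do rewrite mulrA (Ppath_eq htS jS).
rewrite key_sum /Ax sum_splitS; congr (_ + _).
  by apply: eq_bigr => v ->.
by apply: eq_bigr => v /negbTE ->.
Qed.

Lemma sum_neq0 (P : pred 'I_n) (F : 'I_n -> W) : \sum_(i | P i) F i != 0 ->
  exists i, P i && (F i != 0).
Proof.
move=> h; case: (pickP (fun i => P i && (F i != 0))) => [i hi|h0]; first by exists i.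
move: h; rewrite big1 ?eqxx // => i Pi; move: (h0 i); rewrite Pi /=.
by move/negbFE/eqP.
Qed.

Lemma red_P : PropP G (red G S).
Proof.
move=> u hu s sS; rewrite /= in hu sS.
pose D t := u t - \sum_(j in S) Ppath t j * u j.
have hD t : t \in gV G :\: S -> lam * D t = \sum_(v | v \notin S) w (t, v) * D v.
  move=> htS; rewrite /D mulrBr hu // mulr_sumr.
  under eq_bigr => j jS do rewrite mulrA (Ppath_eq htS jS).
  rewrite key_sum /Ax sum_splitS opprD addrACA subrr add0r -sumrB.
  by apply: eq_bigr => v _; rewrite mulrBr.
have hD0 t : t \in gV G :\: S -> D t = 0.
  move=> htS; apply/eqP; apply/negPn/negP => hDt; apply: hac.
  pose Z := [set t | (t \in gV G :\: S) && (D t != 0)].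
  have t0Z : t \in Z by rewrite inE htS hDt.
  have hsucc a : a \in Z -> exists2 v, v \in Z & (a != v) && edge G a v.
    rewrite inE => /andP[haS hDa].
    have aS : a \notin S by move: haS; rewrite inE => /andP[].
    have : (lam - w (a, a)) * D a = \sum_(v | (v \notin S) && (v != a)) w (a, v) * D v.
      by rewrite mulrBl hD // (bigD1 a) //= [LHS]addrC addKr.
    move/eqP; rewrite eq_sym => /eqP hE.
    have : \sum_(v | (v \notin S) && (v != a)) w (a, v) * D v != 0.
      rewrite hE; apply: mulf_neq0; [exact: lam_sub | exact: hDa].
    case/sum_neq0 => v /andP[/andP[vS va]]; rewrite mulf_eq0 negb_or => /andP[wav Dv].
    have eav : edge G a v by apply: contraNT wav => h; rewrite w0.
    exists v; last by rewrite eq_sym va.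
    by rewrite inE Dv andbT inE vS; case/andP: (edgeV eav).
  have [c [c0 cu cZ cc]] := succ_cycle t0Z hsucc.
  exists c; split => //; apply/allP => x /cZ; rewrite inE => /andP[h _]; exact: h.
rewrite Ax_red //.
under eq_bigr => v vS do rewrite (Bsum_dec sS vS).
rewrite key_sum /Ax sum_splitS; congr (_ + _); apply: eq_bigr => v vS.
case: (boolP (v \in gV G)) => vV.
  have : D v = 0 by apply: hD0; rewrite inE vS vV.
  by move/eqP; rewrite subr_eq0 => /eqP ->.
have nev : ~~ edge G s v by apply: contraNN vV => /edgeV /andP[].
by rewrite w0 // !mul0r.
Qed.
End Red.

Section Chain.
Variable n : nat.
Implicit Types (G H : graph n) (S X : {set 'I_n}).

Lemma inv_red G S : ginv (red G S).
Proof.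
split => [[a b]|e]; rewrite /red /= /red_edges.
  by rewrite inE /= => /and3P[-> -> _].
by rewrite ffunE => /negbTE ->.
Qed.

Lemma inv_col H t v : ginv H -> v \notin gV H -> gw H (t, v) = 0.
Proof.
move=> [h1 h2] vV; apply: h2; apply: contraNN vV => /h1 /andP[_ ->] //.
Qed.

Lemma PropP_refl H : PropP H H.
Proof. by []. Qed.

Lemma PropE_refl H : PropE H H.
Proof. by move=> u; exists u; split => // t; rewrite setDv inE. Qed.

Lemma PropP_trans H1 H2 H3 : gV H3 \subset gV H2 -> gV H2 \subset gV H1 ->
  PropP H1 H2 -> PropP H2 H3 -> PropP H1 H3.
Proof.
move=> s32 s21 P12 P23 u hu s sV3.
have hu1 : forall t, t \in gV H1 :\: gV H2 -> lam * u t = Ax H1 u t.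
  move=> t; rewrite !inE => /andP[t2 t1]; apply: hu; rewrite !inE t1 andbT.
  by apply: contra t2; apply: (subsetP s32).
have sV2 := subsetP s32 s sV3.
rewrite (P12 u hu1 s sV2); apply: P23 => // t; rewrite !inE => /andP[t3 t2].
rewrite -(P12 u hu1 t t2); apply: hu; rewrite !inE t3 /=; exact: (subsetP s21).
Qed.

Lemma PropE_trans H1 H2 H3 : gV H3 \subset gV H2 -> gV H2 \subset gV H1 -> ginv H2 ->
  PropP H1 H2 -> PropE H1 H2 -> PropE H2 H3 -> PropE H1 H3.
Proof.
move=> s32 s21 i2 P12 E12 E23 u.
have [u2 [h2a h2b]] := E23 u; have [u1 [h1a h1b]] := E12 u2.
exists u1; split => [s sV3|t].
  by rewrite h1a ?h2a //; exact: (subsetP s32).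
rewrite !inE => /andP[t3 t1].
case: (boolP (t \in gV H2)) => t2; last by apply: h1b; rewrite inE t2 t1.
rewrite h1a // h2b; last by rewrite inE t3 t2.
rewrite (P12 u1 h1b t t2) /Ax; apply: eq_bigr => v _.
case: (boolP (v \in gV H2)) => vV; first by rewrite h1a.
by rewrite inv_col // !mul0r.
Qed.

Lemma gV_red G S : gV (red G S) = S.
Proof. by []. Qed.

Lemma chain G ss : ginv G -> induces G ss ->
  [/\ PropP G (seq_result G ss), PropE G (seq_result G ss),
      gV (seq_result G ss) \subset gV G & ginv (seq_result G ss)].
Proof.
elim: ss G => [|S ss IH] G hinv /=.
  by move=> _; split; [exact: PropP_refl | exact: PropE_refl | exact: subxx | exact: hinv].
move=> [[S0 SV hac hlam] hind].
have [P1 E1 s1 i1] := IH (red G S) (inv_red G S) hind.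
rewrite /seq_result /= -/(seq_result (red G S) ss).
have hP := red_P hinv hac hlam; have hE := red_ext hinv hac hlam.
split => //.
- by apply: PropP_trans hP P1 => //.
- by apply: PropE_trans hP hE E1 => //; exact: inv_red.
- exact: subset_trans s1 SV.
Qed.

Lemma chain_edges G ss : ginv G -> induces G ss -> forall X i j,
  X \subset gV (seq_result G ss) -> i \in X -> j \in X ->
  Bnonempty (seq_result G ss) X i j = Bnonempty G X i j.
Proof.
elim: ss G => [|S ss IH] G hinv //= [[S0 SV hac hlam] hind] X i j hX iX jX.
rewrite /seq_result /= -/(seq_result (red G S) ss).
have [_ _ s1 _] := chain (inv_red G S) hind.
rewrite (IH (red G S) (inv_red G S) hind X i j hX iX jX).
apply: Bne_red => //; exact: subset_trans hX s1.
Qed.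

Lemma induces_rcons G ss S : induces G (rcons ss S) ->
  induces G ss /\ structural (seq_result G ss) S.
Proof.
elim: ss G => [|T ss IH] G /=; first by case.
case=> hT /IH [h1 h2]; split => //.
Qed.

Lemma seq_result_rcons G ss S : seq_result G (rcons ss S) = red (seq_result G ss) S.
Proof. by rewrite /seq_result foldl_rcons. Qed.
End Chain.

Section Final.
Variable n : nat.
Implicit Types (G H R : graph n) (S X : {set 'I_n}).

Lemma pi_Pint (w : 'I_n * 'I_n -> W) : (forall e, pi_nonpos (w e)) ->
  forall s, pi_nonpos (Pint w s).
Proof.
move=> hw; elim => [|u s IH]; first exact: pi1.
case: s IH => [|v s] IH; first exact: pi1.
by apply: piM => //; apply: piV.
Qed.

Lemma pi_Pw (w : 'I_n * 'I_n -> W) : (forall e, pi_nonpos (w e)) ->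
  forall s, pi_nonpos (Pw w s).
Proof.
move=> hw [|u [|v s]]; try exact: pi1.
by apply: piM => //; apply: pi_Pint.
Qed.

Lemma Gpi_red G S : in_Gpi G -> in_Gpi (red G S).
Proof.
move=> hG i j; rewrite /red /= ffunE.
have hw : forall e, pi_nonpos (gw G e) by case=> a b; exact: hG.
case: ifP => _; last exact: pi0.
rewrite /Bsum; apply: (big_ind pi_nonpos pi0 piD) => k _.
apply: (big_ind pi_nonpos pi0 piD) => t _; exact: pi_Pw.
Qed.

Lemma no_cyc_small H (T : {set 'I_n}) : (forall x y, x \in T -> y \in T -> x = y) ->
  ~ has_loopless_cycle_in H T.
Proof.
move=> hT [c [c0 cu call ccyc]].
case: c c0 cu call ccyc => [|x [|y c]] // _.
  by move=> _ _; rewrite /cycle /= eqxx.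
move=> /= /andP[]; rewrite in_cons negb_or => /andP[xy _] _ /and3P[xT yT _].
by move: xy; rewrite (hT x y xT yT) eqxx.
Qed.

Lemma last_nonnil (T : eqType) (x y : T) (s : seq T) : s != [::] -> last x s = last y s.
Proof. by case: s. Qed.

Lemma exist_seq Vf : Vf != set0 -> forall (l : seq 'I_n) H, in_Gpi H ->
  gV H = Vf :|: [set x in l] ->
  exists ss, [/\ ss != [::], induces H ss & last set0 ss = Vf].
Proof.
move=> hVf; elim => [|t l IH] H hpi hV.
  have hV' : gV H = Vf by rewrite hV; apply/setP => x; rewrite !inE orbF.
  exists [:: Vf]; split => //=; split => //; split => //.
  - by rewrite hV'.
  - by apply: no_cyc_small => x y; rewrite hV' setDv inE.
  - by move=> i; rewrite hV' setDv inE.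
set S := Vf :|: [set x in l].
have hstr : structural H S.
  split.
  - apply: contraNneq hVf => hS; apply/eqP/setP => x; rewrite inE.
    by apply/negP => xV; move: (in_set0 x); rewrite -hS inE xV.
  - by rewrite hV; apply/subsetP => x; rewrite !inE; case: (x \in Vf) => //= ->; rewrite orbT.
  - have ht z : z \in gV H :\: S -> z = t.
      rewrite hV !inE.
      by case: (z \in Vf); case: (z \in l) => //=; rewrite orbF => /eqP.
    by apply: no_cyc_small => x y /ht -> /ht ->.
  - by move=> i _; apply: pi_neq_lam; exact: hpi.
have [ss [ss0 hind hl]] := IH (red H S) (Gpi_red S hpi) erefl.
exists (S :: ss); split => //=.
by rewrite (last_nonnil _ set0).
Qed.

Lemma final_form G ss Vf : ginv G -> ss != [::] -> induces G ss -> last set0 ss = Vf ->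
  [/\ gV (seq_result G ss) = Vf,
      gE (seq_result G ss) = [set e | [&& e.1 \in Vf, e.2 \in Vf & Bnonempty G Vf e.1 e.2]],
      (forall e, ~~ ((e.1 \in Vf) && (e.2 \in Vf)) -> gw (seq_result G ss) e = 0),
      PropP G (seq_result G ss) & PropE G (seq_result G ss)].
Proof.
move=> hinv; case/lastP: ss => [|ss Sm] // _ hind; rewrite last_rcons => eS; subst Sm.
have [P E _ _] := chain hinv hind.
move: P E; rewrite seq_result_rcons => P E.
have [hind' hstr] := induces_rcons hind.
have [_ _ s1 i1] := chain hinv hind'.
case: hstr => _ VS _ _.
split => //.
- apply/setP => e; rewrite /red /red_edges /= !inE.
  case eA: (e.1 \in Vf); case eB: (e.2 \in Vf) => //=.
  by rewrite chain_edges.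
- move=> e he; rewrite /red /= ffunE; case: ifP => //.
  by rewrite /red_edges inE => /and3P[h1 h2 _]; move: he; rewrite h1 h2.
Qed.

Lemma Ax_delta R Vf (u : 'I_n -> W) s v : gV R = Vf ->
  (forall e, ~~ ((e.1 \in Vf) && (e.2 \in Vf)) -> gw R e = 0) ->
  s \in Vf -> v \in Vf -> (forall x, x \in Vf -> u x = if x == v then 1 else 0) ->
  Ax R u s = gw R (s, v).
Proof.
move=> hV h0 sV vV hu; rewrite /Ax (bigD1 v) //= hu // eqxx mulr1 big1 ?addr0 //.
move=> x xv; case: (boolP (x \in Vf)) => xV.
  by rewrite hu // (negbTE xv) mulr0.
by rewrite h0 ?mul0r //= (negbTE xV) andbF.
Qed.

Lemma uniq_result G R1 R2 Vf :
  gV R1 = Vf -> gV R2 = Vf -> gE R1 = gE R2 ->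
  (forall e, ~~ ((e.1 \in Vf) && (e.2 \in Vf)) -> gw R1 e = 0) ->
  (forall e, ~~ ((e.1 \in Vf) && (e.2 \in Vf)) -> gw R2 e = 0) ->
  PropP G R1 -> PropP G R2 -> PropE G R1 -> R1 = R2.
Proof.
move=> hV1 hV2 hE z1 z2 P1 P2 E1.
have hw : gw R1 = gw R2.
  apply/ffunP => -[s v].
  case: (boolP ((s \in Vf) && (v \in Vf))) => [/andP[sV vV]|h]; last by rewrite z1 ?z2.
  pose u (x : 'I_n) : W := if x == v then 1 else 0.
  have [u' [h1 h2]] := E1 u.
  have h2' : forall t, t \in gV G :\: gV R2 -> lam * u' t = Ax G u' t.
    by move=> t; rewrite hV2 -hV1; exact: h2.
  have hu' : forall x, x \in Vf -> u' x = if x == v then 1 else 0.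
    by move=> x xV; rewrite h1 // hV1.
  rewrite -(Ax_delta hV1 z1 sV vV hu') -(Ax_delta hV2 z2 sV vV hu').
  rewrite -(P1 u' h2 s) ?hV1 // -(P2 u' h2' s) ?hV2 //.
case: R1 R2 hV1 hV2 hE hw {z1 z2 P1 P2 E1} => V1 E1 w1 [V2 E2 w2] /= -> -> -> -> //.
Qed.
End Final.

Theorem theorem3 (n : nat) (G : graph n) :
  wf_graph G -> gV G = [set: 'I_n] -> in_Gpi G ->
  forall Vf : {set 'I_n}, Vf != set0 ->
    (exists RG : graph n, gV RG = Vf /\
       forall ss : seq {set 'I_n}, ss != [::] -> induces G ss ->
         last set0 ss = Vf -> seq_result G ss = RG)
    /\ (exists ss : seq {set 'I_n},
          [/\ ss != [::], induces G ss & last set0 ss = Vf]).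
Proof.
move=> [hw1 _ hw3] hV hpi Vf hVf.
have hinv : ginv G by split.
have [ss0 [ss00 hind0 hl0]] : exists ss, [/\ ss != [::], induces G ss & last set0 ss = Vf].
  apply: (@exist_seq n Vf hVf (enum (~: Vf)) G hpi).
  by rewrite hV; apply/setP => x; rewrite !inE mem_enum inE; case: (x \in Vf).
split; last by exists ss0.
have [V0 E0 Z0 P0 EE0] := final_form hinv ss00 hind0 hl0.
exists (seq_result G ss0); split => // ss ss1 hind hl.
have [V1 E1 Z1 P1 EE1] := final_form hinv ss1 hind hl.
apply: (uniq_result (G := G) V1 V0 _ Z1 Z0 P1 P0 EE1); by rewrite E1 E0.
Qed.
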